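(* If $L$ is a normal modal logic with the finite model property extending $K4$, then all monomorphisms in $L\mathbf{KFr}_{lf}$ are regular (equivalently, all epimorphisms in $\mathrm{Pro}L\mathbf{MA}_{fin}$ are regular).
   Context: $K4$ is the normal modal logic axiomatized by $\Box x\to\Box\Box x$. $L\mathbf{KFr}_{lf}$ is the category of locally finite Kripke frames validating $L$ (each point reaches only finitely many points via finite $\prec$-paths) with p-morphisms (maps $f$ with $w\prec w'\Rightarrow f(w)\prec f(w')$ and, if $f(w)\prec v'$, some $w'\succ w$ has $f(w')=v'$). $\mathrm{Pro}L\mathbf{MA}_{fin}$, the Pro-completion of finite $L$-algebras, is dually equivalent to $L\mathbf{KFr}_{lf}$. *)

(* Defs.v *)
From Stdlib Require Import List Relations.
Import ListNotations.

Inductive form : Type :=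
| Var : nat -> form
| Bot : form
| Imp : form -> form -> form
| Box : form -> form.

Fixpoint subst (s : nat -> form) (p : form) : form :=
  match p with
  | Var n => s n
  | Bot => Bot
  | Imp a b => Imp (subst s a) (subst s b)
  | Box a => Box (subst s a)
  end.

(* classical tautologies: boolean evaluation treating variables and
   boxed formulas as atoms *)
Fixpoint beval (v : form -> bool) (p : form) : bool :=
  match p with
  | Var n => v (Var n)
  | Bot => false
  | Imp a b => implb (beval v a) (beval v b)
  | Box a => v (Box a)
  end.

Definition tautology (p : form) : Prop := forall v, beval v p = true.

Definition logic := form -> Prop.

Definition normal_logic (L : logic) : Prop :=
  (forall p, tautology p -> L p) /\
  (forall p q, L (Imp (Box (Imp p q)) (Imp (Box p) (Box q)))) /\
  (forall p q, L p -> L (Imp p q) -> L q) /\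
  (forall p, L p -> L (Box p)) /\
  (forall s p, L p -> L (subst s p)).

Definition ax4 : form := Imp (Box (Var 0)) (Box (Box (Var 0))).

Definition extends_K4 (L : logic) : Prop := normal_logic L /\ L ax4.

Record frame : Type := Frame { W :> Type; R : W -> W -> Prop }.

Fixpoint sat (F : frame) (V : nat -> W F -> Prop) (w : W F) (p : form) : Prop :=
  match p with
  | Var n => V n w
  | Bot => False
  | Imp a b => sat F V w a -> sat F V w b
  | Box a => forall w', R F w w' -> sat F V w' a
  end.

Definition valid (F : frame) (p : form) : Prop :=
  forall V w, sat F V w p.

Definition validates (F : frame) (L : logic) : Prop :=
  forall p, L p -> valid F p.

Definition finite_type (T : Type) : Prop := exists l : list T, forall x, In x l.

Definition fmp (L : logic) : Prop :=
  forall p, ~ L p ->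
    exists F : frame, finite_type (W F) /\ validates F L /\ ~ valid F p.

Definition locally_finite (F : frame) : Prop :=
  forall w, exists l : list (W F),
    forall v, clos_refl_trans _ (R F) w v -> In v l.

Definition LKFr_lf (L : logic) (F : frame) : Prop :=
  locally_finite F /\ validates F L.

Definition pmorphism (F G : frame) (f : W F -> W G) : Prop :=
  (forall w w', R F w w' -> R G (f w) (f w')) /\
  (forall w v', R G (f w) v' -> exists w', R F w w' /\ f w' = v').

Definition mono_in (L : logic) (F G : frame) (f : W F -> W G) : Prop :=
  forall (H : frame), LKFr_lf L H ->
  forall g h : W H -> W F, pmorphism H F g -> pmorphism H F h ->
    (forall x, f (g x) = f (h x)) -> forall x, g x = h x.

Definition regular_mono_in (L : logic) (F G : frame) (f : W F -> W G) : Prop :=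
  exists (K : frame) (g h : W G -> W K),
    LKFr_lf L K /\ pmorphism G K g /\ pmorphism G K h /\
    (forall x, g (f x) = h (f x)) /\
    (forall (H : frame), LKFr_lf L H ->
     forall k : W H -> W G, pmorphism H G k ->
       (forall x, g (k x) = h (k x)) ->
       exists u : W H -> W F,
         pmorphism H F u /\ (forall x, f (u x) = k x) /\
         (forall u' : W H -> W F, pmorphism H F u' ->
            (forall x, f (u' x) = k x) -> forall x, u' x = u x)).

(* Main.v *)
Require Import Defs.
From Stdlib Require Import List Relations.
From Stdlib Require Import Classical ClassicalEpsilon ProofIrrelevance Lia.
Import ListNotations.

Lemma sat_ext (F : frame) (V1 V2 : nat -> W F -> Prop) :
  (forall n a, V1 n a <-> V2 n a) -> forall p a, sat F V1 a p <-> sat F V2 a p.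
Proof.
  intros HV p; induction p; intro a; simpl.
  - apply HV.
  - tauto.
  - rewrite (IHp1 a), (IHp2 a). tauto.
  - split; intros H w' Hw; apply IHp; auto.
Qed.

Lemma pmorph_sat (H F : frame) (pi : W H -> W F) (V : nat -> W F -> Prop) :
  pmorphism H F pi -> forall p a, sat H (fun n x => V n (pi x)) a p <-> sat F V (pi a) p.
Proof.
  intros [Hf Hb] p; induction p; intro a; simpl.
  - tauto.
  - tauto.
  - rewrite (IHp1 a), (IHp2 a); tauto.
  - split.
    + intros Hs v' Hv. destruct (Hb a v' Hv) as [w' [Hw <-]]. apply IHp. auto.
    + intros Hs w' Hw. apply IHp. apply Hs. auto.
Qed.

Lemma pmorph_image_validates (H F : frame) (pi : W H -> W F) L :
  pmorphism H F pi -> (forall y, exists x, pi x = y) -> validates H L -> validates F L.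
Proof.
  intros Hp Hs HL p Lp V y. destruct (Hs y) as [x <-].
  apply (pmorph_sat H F pi V Hp). apply HL; auto.
Qed.

Lemma trans_of_4 (F : frame) : valid F ax4 -> forall x y z, R F x y -> R F y z -> R F x z.
Proof.
  intros Hv x y z Hxy Hyz.
  specialize (Hv (fun _ w => R F x w) x). simpl in Hv.
  exact (Hv (fun w' H => H) y Hxy z Hyz).
Qed.

Lemma crt_trans (F : frame) : (forall x y z, R F x y -> R F y z -> R F x z) ->
  forall x y, clos_refl_trans _ (R F) x y -> x = y \/ R F x y.
Proof.
  intros T x y H; induction H; [right; auto| left; auto| ].
  destruct IHclos_refl_trans1 as [->|], IHclos_refl_trans2 as [->|]; eauto.
Qed.

Lemma crt_map (H F : frame) (pi : W H -> W F) : (forall a b, R H a b -> R F (pi a) (pi b)) ->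
  forall a b, clos_refl_trans _ (R H) a b -> clos_refl_trans _ (R F) (pi a) (pi b).
Proof.
  intros Hf a b Hr; induction Hr.
  - apply rt_step; auto.
  - apply rt_refl.
  - eapply rt_trans; eauto.
Qed.

Lemma sig_eq {A} {P : A -> Prop} (a b : {x | P x}) : proj1_sig a = proj1_sig b -> a = b.
Proof. destruct a, b; simpl; intros ->; f_equal; apply proof_irrelevance. Qed.

Definition sub (F : frame) (x : W F) : frame :=
  Frame {y : W F | clos_refl_trans _ (R F) x y}
        (fun a b => R F (proj1_sig a) (proj1_sig b)).

Lemma crt_ext (F : frame) x y z : clos_refl_trans _ (R F) x y -> R F y z ->
  clos_refl_trans _ (R F) x z.
Proof. intros; eapply rt_trans; [eassumption| apply rt_step; assumption]. Qed.

Lemma sub_incl_pm F x : pmorphism (sub F x) F (@proj1_sig _ _).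
Proof.
  split.
  - intros; auto.
  - intros [w Hw] v' Hv. simpl in *.
    exists (exist _ v' (crt_ext F _ _ _ Hw Hv)). simpl. auto.
Qed.

Lemma sub_validates F x L : validates F L -> validates (sub F x) L.
Proof.
  intros HL p Lp V' s.
  set (V := fun n z => forall pf : clos_refl_trans _ (R F) x z, V' n (exist _ z pf)).
  apply (proj2 (sat_ext (sub F x) V' (fun n a => V n (proj1_sig a))
                (ltac:(intros n [z pz]; unfold V; simpl; split; intros H;
                       [intros pf; rewrite (proof_irrelevance _ pf pz); auto | apply H])) p s)).
  apply (pmorph_sat (sub F x) F _ V (sub_incl_pm F x)). apply HL; auto.
Qed.

Lemma sub_lf F x : locally_finite F -> locally_finite (sub F x).
Proof.
  intros Hlf [y py]. destruct (Hlf y) as [l Hl].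
  exists (flat_map (fun z => match excluded_middle_informative (clos_refl_trans _ (R F) x z) with
                             | left pf => [exist _ z pf] | right _ => [] end) l).
  intros [v pv] Hr. apply in_flat_map. exists v. split.
  - apply Hl.
    apply (crt_map (sub F x) F (@proj1_sig _ _) (fun a b H => H) _ _ Hr).
  - destruct (excluded_middle_informative _) as [pf|n]; [left; apply sig_eq; reflexivity | contradiction].
Qed.

Lemma sub_LK L F x : LKFr_lf L F -> LKFr_lf L (sub F x).
Proof. intros [A B]; split; [apply sub_lf | apply sub_validates]; auto. Qed.

Definition below (F : frame) (a b : W F) := R F b a /\ ~ R F a b.

Lemma acc_below F : (forall x y z, R F x y -> R F y z -> R F x z) ->
  locally_finite F -> forall x, Acc (below F) x.
Proof.
  intros T Hlf.
  assert (aux : forall n (l : list (W F)) y, length l <= n ->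
            (forall z, clos_refl_trans _ (R F) y z -> In z l) -> Acc (below F) y).
  { induction n; intros l y Hlen Hin.
    - destruct l; [|simpl in Hlen; lia]. exfalso; apply (Hin y), rt_refl.
    - constructor. intros z [Hyz Hnzy].
      destruct (in_split y l (Hin y (rt_refl _ _ _))) as [l1 [l2 ->]].
      apply (IHn (l1 ++ l2)).
      + rewrite length_app in *; simpl in Hlen; lia.
      + intros w Hw.
        assert (Hyw : clos_refl_trans _ (R F) y w) by (eapply rt_trans; [apply rt_step; eauto| eauto]).
        specialize (Hin w Hyw). apply in_app_iff in Hin. apply in_app_iff.
        destruct Hin as [|[E|]]; auto.
        exfalso. subst w. destruct (crt_trans F T z y Hw) as [E|]; auto. subst z; auto. }
  intros x. destruct (Hlf x) as [l Hl]. eapply aux; eauto.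
Qed.

Lemma mono_injective L (F G : frame) (f : W F -> W G) :
  extends_K4 L -> LKFr_lf L F -> pmorphism F G f -> mono_in L F G f ->
  forall x1 x2, f x1 = f x2 -> x1 = x2.
Proof.
  intros HK HF Hf Hmono.
  pose proof HF as [Hlf HvF]. pose proof Hf as [Hff Hfb].
  assert (T : forall x y z, R F x y -> R F y z -> R F x z)
    by (apply trans_of_4; apply HvF; apply (proj2 HK)).
  intros x1. induction (acc_below F T Hlf x1) as [x1 _ IH].
  intros x2 Hfx. apply NNPP; intro Hne.
  set (C1 := fun y => y = x1 \/ (R F x1 y /\ R F y x1)).
  set (D := fun y => below F y x1).
  assert (F1 : forall c d, C1 c -> D d -> R F c d).
  { intros c d [->|[_ ?]] [? _]; eauto. }
  assert (F2 : forall d y, D d -> R F d y -> D y).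
  { intros d y [H1 H2] H3. split; eauto. }
  assert (F3 : forall c y d, C1 c -> f y = f c -> D d -> R F y d).
  { intros c y d Hc Hy Hd. pose proof (Hff c d (F1 c d Hc Hd)) as H.
    rewrite <- Hy in H. destruct (Hfb y (f d) H) as [z [Hz Ez]].
    rewrite (IH d Hd z (eq_sym Ez)). auto. }
  assert (F4 : forall c w, C1 c -> R F c w -> R F x1 w).
  { intros c w [->|[? _]] ?; eauto. }
  assert (F5 : forall y, D y -> C1 y -> False).
  { intros y [H1 H2] [->|[_ H3]]; auto. }
  assert (F6 : forall y c, D y -> C1 c -> f y = f c -> False).
  { intros y c Hy Hc E. rewrite (IH y Hy c E) in Hy. eauto. }
  assert (F7 : forall c y y', C1 c -> f y = f c -> R F y y' ->
             D y' \/ exists c', C1 c' /\ f y' = f c').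
  { intros c y y' Hc Hy Hyy. pose proof (Hff _ _ Hyy) as H. rewrite Hy in H.
    destruct (Hfb c _ H) as [w [Hw Ew]]. pose proof (F4 c w Hc Hw) as Hxw.
    destruct (classic (R F w x1)) as [Hwx|Hwx].
    - right. exists w. split; [right; auto | auto].
    - left. assert (Dw : D w) by (split; auto). rewrite <- (IH w Dw y' Ew). auto. }
  destruct (classic (forall c c', C1 c -> C1 c' -> f c = f c' -> c = c')) as [Inj | NInj].
  -
    assert (Hx2 : forall y, clos_refl_trans _ (R F) x2 y ->
              exists c, (D y /\ c = y) \/ (~ D y /\ C1 c /\ f c = f y)).
    { intros y Hy. destruct (classic (D y)) as [Dy|NDy]; [exists y; left; auto|].
      destruct (crt_trans F T _ _ Hy) as [<-|Hxy].
      - exists x1. right. split; [auto| split; [left; auto| auto]].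
      - destruct (F7 x1 x2 y (or_introl eq_refl) (eq_sym Hfx) Hxy) as [|[c' [Hc' E]]]; [contradiction|].
        exists c'. right. auto. }
    set (hh := fun s : W (sub F x2) =>
                 proj1_sig (constructive_indefinite_description _ (Hx2 (proj1_sig s) (proj2_sig s)))).
    assert (Hs : forall s, (D (proj1_sig s) /\ hh s = proj1_sig s) \/
                           (~ D (proj1_sig s) /\ C1 (hh s) /\ f (hh s) = f (proj1_sig s))).
    { intros s. unfold hh. destruct (constructive_indefinite_description _ _) as [c Hc]. simpl.
      destruct Hc as [[? ?]|?]; auto. }
    assert (Hfh : forall s, f (proj1_sig s) = f (hh s)).
    { intros s. destruct (Hs s) as [[_ E]|[_ [_ E]]]; rewrite E; auto. }
    assert (Hpm : pmorphism (sub F x2) F hh).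
    { split.
      - intros s s' Hr. simpl in Hr.
        destruct (Hs s) as [[Ds Es]|[NDs [Cs Es]]].
        + pose proof (F2 _ _ Ds Hr) as Ds'.
          destruct (Hs s') as [[_ Es']|[NDs' _]]; [|contradiction].
          rewrite Es, Es'; auto.
        + destruct (Hs s') as [[Ds' Es']|[NDs' [Cs' Es']]].
          * rewrite Es'. apply F1; auto.
          * pose proof (Hff _ _ Hr) as H. rewrite <- Es, <- Es' in H.
            destruct (Hfb _ _ H) as [w [Hw Ew]].
            pose proof (F4 _ _ Cs Hw) as Hxw.
            destruct (classic (R F w x1)) as [Hwx|Hwx].
            -- rewrite <- (Inj w (hh s') (or_intror (conj Hxw Hwx)) Cs' Ew). auto.
            -- exfalso. apply (F6 w (hh s')); auto. split; auto.
      - intros s v Hv.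
        destruct (Hs s) as [[Ds Es]|[NDs [Cs Es]]].
        + rewrite Es in Hv. pose proof (F2 _ _ Ds Hv) as Dv.
          exists (exist _ v (crt_ext F _ _ _ (proj2_sig s) Hv)). split; [simpl; auto|].
          destruct (Hs (exist _ v (crt_ext F _ _ _ (proj2_sig s) Hv))) as [[_ E]|[ND _]];
            simpl in *; [auto|contradiction].
        + pose proof (F4 _ _ Cs Hv) as Hxv.
          destruct (classic (R F v x1)) as [Hvx|Hvx].
          * pose proof (Hff _ _ Hv) as H. rewrite Es in H.
            destruct (Hfb _ _ H) as [w [Hw Ew]].
            exists (exist _ w (crt_ext F _ _ _ (proj2_sig s) Hw)). split; [simpl; auto|].
            destruct (Hs (exist _ w (crt_ext F _ _ _ (proj2_sig s) Hw))) as [[Dw _]|[NDw [Cw Ew']]];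
              simpl in *.
            -- exfalso. apply (F6 w v); auto. right; auto.
            -- apply Inj; auto; [right; auto | etransitivity; [exact Ew' | exact Ew]].
          * assert (Dv : D v) by (split; auto).
            exists (exist _ v (crt_ext F _ _ _ (proj2_sig s) (F3 _ _ _ Cs (eq_sym Es) Dv))).
            split; [simpl; apply (F3 _ _ _ Cs (eq_sym Es) Dv)|].
            match goal with |- hh ?s' = _ => destruct (Hs s') as [[_ E]|[ND _]] end;
              simpl in *; [auto|contradiction]. }
    pose proof (Hmono (sub F x2) (sub_LK L F x2 HF) (@proj1_sig _ _) hh
                  (sub_incl_pm F x2) Hpm Hfh (exist _ x2 (rt_refl _ _ _))) as E.
    simpl in E.
    destruct (Hs (exist _ x2 (rt_refl _ _ _))) as [[Dx2 _]|[_ [Cx E2]]]; simpl in *.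
    + apply Hne. symmetry. apply (IH x2 Dx2 x1). auto.
    + apply Hne. rewrite E. apply Inj; auto. left; auto. congruence.
  -
    assert (Hex : exists c c', C1 c /\ C1 c' /\ f c = f c' /\ c <> c').
    { apply NNPP; intro N. apply NInj. intros c c' Hc Hc' E. apply NNPP; intro N'.
      apply N. exists c, c'. auto. }
    destruct Hex as [c [c' [Hc [Hc' [Ecc Ncc]]]]].
    assert (Rx1 : R F x1 x1).
    { destruct Hc as [->|[? ?]]; [destruct Hc' as [->|[? ?]]; [congruence|eauto]|eauto]. }
    assert (Cf : forall a, C1 a -> R F x1 a /\ R F a x1).
    { intros a [->|?]; auto. }
    set (eqv := fun a b => a = b \/ (C1 a /\ C1 b)).
    assert (Rc : forall a b a' b', R F a b -> eqv a a' -> eqv b b' -> R F a' b').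
    { intros a b a' b' H [<-|[Ca Ca']] [<-|[Cb Cb']].
      - auto.
      - apply (T _ x1); [|apply Cf; auto]. apply (T _ b); auto; apply Cf; auto.
      - apply (T _ x1); [apply Cf; auto|]. apply (T _ a); auto; apply Cf; auto.
      - apply (T _ x1); apply Cf; auto. }
    set (sg := fun y => if excluded_middle_informative (y = c) then c'
                        else if excluded_middle_informative (y = c') then c else y).
    assert (Sg1 : forall y, eqv y (sg y)).
    { intros y. unfold sg, eqv.
      destruct (excluded_middle_informative (y = c)); [subst; auto|].
      destruct (excluded_middle_informative (y = c')); [subst; auto|auto]. }
    assert (Sg1' : forall y, eqv (sg y) y).
    { intros y. destruct (Sg1 y) as [E|[]]; [left; auto|right; auto]. }
    assert (Sg2 : forall y, sg (sg y) = y).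
    { intros y. unfold sg.
      repeat (destruct (excluded_middle_informative _)); subst; congruence. }
    assert (Sg3 : forall y, f (sg y) = f y).
    { intros y. unfold sg.
      destruct (excluded_middle_informative (y = c)); [subst; auto|].
      destruct (excluded_middle_informative (y = c')); [subst; auto|auto]. }
    assert (Hpm : pmorphism (sub F x1) F (fun s => sg (proj1_sig s))).
    { split.
      - intros s s' Hr. simpl in Hr. eapply Rc; eauto.
      - intros s v Hv.
        assert (Hr : R F (proj1_sig s) (sg v)) by (eapply Rc; eauto).
        exists (exist _ (sg v) (crt_ext F _ _ _ (proj2_sig s) Hr)). simpl. auto. }
    assert (Pc : clos_refl_trans _ (R F) x1 c).
    { destruct Hc as [->|[? _]]; [apply rt_refl| apply rt_step; auto]. }
    pose proof (Hmono (sub F x1) (sub_LK L F x1 HF) (@proj1_sig _ _) (fun s => sg (proj1_sig s))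
                  (sub_incl_pm F x1) Hpm (fun s => eq_sym (Sg3 _)) (exist _ c Pc)) as E.
    simpl in E. unfold sg in E.
    destruct (excluded_middle_informative (c = c)); congruence.
Qed.

Definition inU (F G : frame) (f : W F -> W G) (y : W G) : bool :=
  if excluded_middle_informative (exists x, f x = y) then true else false.

Definition Kfr (F G : frame) (f : W F -> W G) : frame :=
  Frame {p : W G * bool | snd p = true -> inU F G f (fst p) = false}
    (fun a b => R G (fst (proj1_sig a)) (fst (proj1_sig b)) /\
       snd (proj1_sig b) = andb (snd (proj1_sig a)) (negb (inU F G f (fst (proj1_sig b))))).

Lemma nb_ok b u : andb b (negb u) = true -> u = false.
Proof. destruct b, u; simpl; congruence. Qed.

Definition nrm F G f (y : W G) (b : bool) : W (Kfr F G f) :=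
  exist _ (y, andb b (negb (inU F G f y))) (nb_ok b (inU F G f y)).

Definition Dfr (G : frame) : frame :=
  Frame (W G * bool) (fun a b => R G (fst a) (fst b) /\ snd a = snd b).

Lemma Dfr_validates G L : validates G L -> validates (Dfr G) L.
Proof.
  intros HG p Lp V [y b].
  assert (Hpm : pmorphism G (Dfr G) (fun y => (y, b))).
  { split.
    - intros w w' H. simpl. auto.
    - intros w [v' b'] [H1 H2]. simpl in *. exists v'. subst; auto. }
  apply (pmorph_sat G (Dfr G) _ V Hpm). apply HG; auto.
Qed.

Theorem proposition5p8_aux :
  forall L : logic, extends_K4 L -> fmp L ->
  forall (F G : frame), LKFr_lf L F -> LKFr_lf L G ->
  forall f : W F -> W G, pmorphism F G f ->
    mono_in L F G f -> regular_mono_in L F G f.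
Proof.
  intros L HK _ F G HF HG f Hf Hmono.
  pose proof (mono_injective L F G f HK HF Hf Hmono) as Inj.
  pose proof Hf as [Hff Hfb].
  assert (Up : forall y y', inU F G f y = true -> R G y y' -> inU F G f y' = true).
  { unfold inU. intros y y'.
    destruct (excluded_middle_informative (exists x, f x = y)) as [[x <-]|]; [|discriminate].
    intros _ H. destruct (Hfb x y' H) as [w [_ E]].
    destruct (excluded_middle_informative _) as [|n]; [auto|exfalso; apply n; eauto]. }
  assert (NN : forall y y' a, R G y y' ->
     andb (andb a (negb (inU F G f y))) (negb (inU F G f y')) = andb a (negb (inU F G f y'))).
  { intros y y' a H. destruct (inU F G f y) eqn:E.
    - rewrite (Up y y' E H). destruct a; auto.
    - destruct a; auto. }
  assert (Neq : forall k : W (Kfr F G f), nrm F G f (fst (proj1_sig k)) (snd (proj1_sig k)) = k).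
  { intros [[y b] pf]. apply sig_eq. simpl. f_equal. destruct b; [|auto].
    simpl in pf. rewrite (pf eq_refl). auto. }
  assert (Kpm : forall b, pmorphism G (Kfr F G f) (fun y => nrm F G f y b)).
  { intros b. split.
    - intros w w' H. simpl. split; auto. symmetry. apply NN; auto.
    - intros w [[v' b'] pf] [H1 H2]. simpl in *. exists v'. split; auto.
      apply sig_eq. simpl. f_equal. rewrite H2. symmetry; apply NN; auto. }
  assert (KL : LKFr_lf L (Kfr F G f)).
  { split.
    - intros k. destruct (proj1 HG (fst (proj1_sig k))) as [l Hl].
      exists (flat_map (fun y => [nrm F G f y true; nrm F G f y false]) l).
      intros k' Hr. apply in_flat_map. exists (fst (proj1_sig k')). split.
      + apply Hl. apply (crt_map (Kfr F G f) G (fun k => fst (proj1_sig k))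
                        (fun a b H => proj1 H) _ _ Hr).
      + rewrite <- (Neq k') at 1. destruct (snd (proj1_sig k')); simpl; auto.
    - apply (pmorph_image_validates (Dfr G) (Kfr F G f) (fun p => nrm F G f (fst p) (snd p))).
      + split.
        * intros [w a] [w' a'] [H1 H2]. simpl in *. subst a'. split; auto.
          symmetry; apply NN; auto.
        * intros [w a] [[v' b'] pf] [H1 H2]. simpl in *. exists (v', a). simpl. split; [auto|].
          apply sig_eq. simpl. f_equal. rewrite H2. symmetry; apply NN; auto.
      + intros k. exists (fst (proj1_sig k), snd (proj1_sig k)). apply Neq.
      + apply Dfr_validates. apply (proj2 HG). }
  assert (InF : forall x, inU F G f (f x) = true).
  { intros x. unfold inU. destruct (excluded_middle_informative _) as [|n]; [auto|exfalso; apply n; eauto]. }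
  exists (Kfr F G f), (fun y => nrm F G f y false), (fun y => nrm F G f y true).
  split; [exact KL|]. split; [apply Kpm|]. split; [apply Kpm|]. split.
  { intros x. apply sig_eq. simpl. rewrite InF. auto. }
  intros H HH k Hk Heq.
  assert (Hex : forall x, exists x', f x' = k x).
  { intros x. pose proof (f_equal (fun z => snd (proj1_sig z)) (Heq x)) as E. simpl in E.
    unfold inU in E. destruct (excluded_middle_informative _) as [e|]; [exact e|discriminate]. }
  set (u := fun x => proj1_sig (constructive_indefinite_description _ (Hex x))).
  assert (Hu : forall x, f (u x) = k x).
  { intros x. unfold u. destruct (constructive_indefinite_description _ _); auto. }
  destruct Hk as [Hkf Hkb].
  exists u. split; [|split; [exact Hu|]].
  - split.
    + intros a b Hab. pose proof (Hkf a b Hab) as H1. rewrite <- (Hu a), <- (Hu b) in H1.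
      destruct (Hfb _ _ H1) as [w [Hw Ew]]. rewrite <- (Inj _ _ Ew). auto.
    + intros a w' Hw. pose proof (Hff _ _ Hw) as H1. rewrite Hu in H1.
      destruct (Hkb _ _ H1) as [a' [Ha' E]]. exists a'. split; auto.
      apply Inj. rewrite Hu. auto.
  - intros u' _ Hu' x. apply Inj. rewrite Hu, Hu'. auto.
Qed.

Theorem proposition5p8 :
  forall L : logic, extends_K4 L -> fmp L ->
  forall (F G : frame), LKFr_lf L F -> LKFr_lf L G ->
  forall f : W F -> W G, pmorphism F G f ->
    mono_in L F G f -> regular_mono_in L F G f.
Proof. exact proposition5p8_aux. Qed.
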